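(* Let $1\le t\le k$ be integers and let $U$ be a $t$-intersecting family of polynomials over $\mathbb{F}_q$ of degree at most $k$. Then distinct members of $U$ have distinct $(k-t+1)$-tuples of coefficients of the monomials $x^t,x^{t+1},\ldots,x^k$; i.e. the map sending a polynomial in $U$ to the tuple of its coefficients of $x^t,\ldots,x^k$ is injective on $U$.
   Context: A set $U$ of polynomials over $\mathbb{F}_q$ is $t$-intersecting if for any two $f_1,f_2\in U$ we have $|\{(x,f_1(x)):x\in\mathbb{F}_q\}\cap\{(x,f_2(x)):x\in\mathbb{F}_q\}|\ge t$. *)

(* Defs.v *)
From HB Require Import structures.
From mathcomp Require Import all_boot all_order all_algebra all_field.
Set Implicit Arguments. Unset Strict Implicit. Unset Printing Implicit Defensive.
Import GRing.Theory.
Local Open Scope ring_scope.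

(* A family U of polynomials over the finite field F (F plays the role of F_q)
   is t-intersecting if any two members f1, f2 of U have graphs
   {(x, f1(x)) : x in F} and {(x, f2(x)) : x in F} sharing at least t points,
   i.e. f1 and f2 agree at at least t points x of F. *)
Definition t_intersecting (F : finFieldType) (t : nat) (U : pred {poly F}) : Prop :=
  forall f1 f2 : {poly F}, U f1 -> U f2 ->
    (t <= #|[set x : F | f1.[x] == f2.[x]]|)%N.

(* Main.v *)
Require Import Defs.
From mathcomp Require Import all_boot all_order all_algebra all_field.
Local Open Scope ring_scope.
Import GRing.Theory.

Theorem lemma4 (F : finFieldType) (t k : nat) (U : pred {poly F}) :
  (1 <= t)%N -> (t <= k)%N ->
  (forall f, U f -> (size f <= k.+1)%N) ->
  t_intersecting t U ->
  forall f1 f2 : {poly F}, U f1 -> U f2 ->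
    (forall i : nat, (t <= i <= k)%N -> f1`_i = f2`_i) ->
    f1 = f2.
Proof.
move=> t1 tk Hs Hint f1 f2 U1 U2 Hc.
apply/eqP; rewrite -subr_eq0; apply/negPn/negP => nz.
have Hsz : (size (f1 - f2)%R <= t)%N.
  apply/leq_sizeP => j tj; rewrite coefB.
  case: (leqP j k) => jk.
    by rewrite (Hc j) ?subrr // tj jk.
  have /leq_sizeP -> := Hs _ U1 => //.
  by have /leq_sizeP -> := Hs _ U2; rewrite ?subrr.
set S := [set x : F | f1.[x] == f2.[x]].
have HS := Hint _ _ U1 U2.
have Hall : all (root (f1 - f2)) (enum S).
  apply/allP => x; rewrite mem_enum inE => /eqP e.
  by rewrite /root hornerD hornerN e subrr.
have := max_poly_roots nz Hall (enum_uniq _).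
rewrite -cardE => H.
have := leq_trans H Hsz; rewrite -/S in HS.
by rewrite ltnNge HS.
Qed.
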